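(* $\mathcal{LUMI}^{S}_{\mathcal{F.V.}} > \mathcal{LUMI}^{S}_{\mathcal{L.V.}}$, i.e. the model $\mathcal{LUMI}$ under the semi-synchronous scheduler with full visibility is computationally more powerful than the model $\mathcal{LUMI}$ under the semi-synchronous scheduler with limited visibility.
   Context: Robots are anonymous, identical, autonomous computational entities viewed as points moving in the Euclidean plane. Each has its own local coordinate system, with no agreement between robots and no common chirality, and perceives itself at its origin. Robots operate in Look-Compute-Move cycles. In Look a robot takes an instantaneous snapshot of the positions (and visible lights, if any) of the robots it can see. In Compute it runs the common algorithm on the snapshot to obtain a destination. In Move it moves there. Models: - $\mathcal{OBLOT}$: robots are oblivious (no memory of previous cycles) and silent (no means of communication). - $\mathcal{LUMI}$: each robot carries a persistent light whose color is taken from a finite set and is set at the end of Compute; the light is visible to the robot itself and to the other robots. - $\mathcal{FSTA}$: the light is internal, visible only to its owner. It acts as a finite persistent state; there is no communication. - $\mathcal{FCOM}$: the light is visible only to the other robots. A robot does not see its own light and is otherwise oblivious. Schedulers: time is divided into rounds. Under the semi-synchronous scheduler $S$ (SSYNCH), in each round an adversarially chosen set of robots is activated and they perform one full cycle in perfect synchronization; every robot is activated infinitely often. Under the fully synchronous scheduler $F$ (FSYNCH), every robot is activated in every round. Visibility: - Full visibility $\mathcal{F.V.}$: every robot sees all robots. - Limited visibility $\mathcal{L.V.}$: a robot sees only the robots within a fixed distance $V_r$ of its current position, with $V_r$ the same for all robots. The visibility graph (robots adjacent iff they see each other) of the initial configuration is assumed connected. Relations: $\mathcal{M}^X_V$ denotes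 model $\mathcal{M}$ under scheduler $X$ with visibility $V$. For a team $R$ of robots, $Task(\mathcal{M},X,V;R)$ is the set of problems (tasks where robots must form some configuration(s) subject to conditions) solvable by $R$ in that setting. $\mathcal{R}$ is the set of all teams, and $\mathcal{R}_n$ the set of teams of size $n$. - $\mathcal{M}^{X_1}_{V_1} \ge \mathcal{N}^{X_2}_{V_2}$ if for all $R\in\mathcal{R}$, $Task(\mathcal{M},X_1,V_1;R)\supseteq Task(\mathcal{N},X_2,V_2;R)$. - $>$ means $\ge$ holds and there exists $R\in\mathcal{R}$ with $Task(\mathcal{M},X_1,V_1;R)\setminus Task(\mathcal{N},X_2,V_2;R)\neq\emptyset$. - $\perp$ (incomparable) means there exist $R_1,R_2\in\mathcal{R}$ with $Task(\mathcal{M},X_1,V_1;R_1)\setminus Task(\mathcal{N},X_2,V_2;R_1)\neq\emptyset$ and $Task(\mathcal{N},X_2,V_2;R_2)\setminus Task(\mathcal{M},X_1,V_1;R_2)\neq\emptyset$. *)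

(* Defs.v *)
From Stdlib Require Import Reals List Permutation Arith Bool.
Open Scope R_scope.

Definition point : Type := (R * R)%type.
Definition color : Type := nat.

Definition padd (p q : point) : point := (fst p + fst q, snd p + snd q).
Definition psub (p q : point) : point := (fst p - fst q, snd p - snd q).
Definition dist (p q : point) : R :=
  sqrt ((fst p - fst q) ^ 2 + (snd p - snd q) ^ 2).

(** A local coordinate system (up to the origin, which is always the robot's
    current position): an arbitrary positive unit of length [fr_scale], an
    arbitrary orientation of the axes ([fr_cos], [fr_sin]) and an arbitrary
    handedness ([fr_refl] = true means the opposite chirality). *)
Record frame := { fr_scale : R; fr_cos : R; fr_sin : R; fr_refl : bool }.

Definition frame_valid (f : frame) : Prop :=
  0 < fr_scale f /\ fr_cos f ^ 2 + fr_sin f ^ 2 = 1.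

Definition to_local (f : frame) (v : point) : point :=
  let x := fst v in let y := snd v in
  let c := fr_cos f in let s := fr_sin f in let k := fr_scale f in
  if fr_refl f then (k * (c * x + s * y), k * (s * x - c * y))
  else (k * (c * x - s * y), k * (s * x + c * y)).

Definition to_global (f : frame) (w : point) : point :=
  let x := fst w / fr_scale f in let y := snd w / fr_scale f in
  let c := fr_cos f in let s := fr_sin f in
  if fr_refl f then (c * x + s * y, s * x - c * y)
  else (c * x + s * y, - s * x + c * y).

Inductive visibility := FullVis | LimitedVis.
Inductive scheduler := SSync | FSync.

Record team := { t_size : nat; t_range : R }.
Definition team_valid (T : team) : Prop := (1 <= t_size T)%nat /\ 0 < t_range T.

Definition seesb (V : visibility) (T : team) (p q : point) : bool :=
  match V with
  | FullVis => true
  | LimitedVis => if Rle_dec (dist p q) (t_range T) then true else false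
  end.

(** Snapshot of the other visible robots: their positions in the local frame
    of the observer (which is at its own origin) together with their lights. *)
Definition snapshot := list (point * color).

(** The common algorithm: input = visibility radius in local units, own light
    (visible to itself in LUMI), snapshot; output = destination in local
    coordinates and new light. *)
Definition algorithm := R -> color -> snapshot -> (point * color)%type.

(** Robots are anonymous: the output cannot depend on the order in which the
    observed robots are listed. *)
Definition perm_invariant (A : algorithm) : Prop :=
  forall v c s s', Permutation s s' -> A v c s = A v c s'.

Definition uses_colors (k : nat) (A : algorithm) : Prop :=
  forall v c s, (snd (A v c s) < k)%nat.

Definition config := ((nat -> point) * (nat -> color))%type.

Definition snap (V : visibility) (T : team) (fr : frame)
  (pos : nat -> point) (col : nat -> color) (i : nat) : snapshot :=
  map (fun j => (to_local fr (psub (pos j) (pos i)), col j))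
      (filter (fun j => andb (negb (Nat.eqb j i)) (seesb V T (pos i) (pos j)))
              (seq 0 (t_size T))).

Definition step (V : visibility) (T : team) (A : algorithm)
  (frames : nat -> frame) (active : nat -> bool) (c : config) : config :=
  let pos := fst c in let col := snd c in
  let out i := A (fr_scale (frames i) * t_range T) (col i)
                 (snap V T (frames i) pos col i) in
  let on i := andb (active i) (Nat.ltb i (t_size T)) in
  (fun i => if on i then padd (pos i) (to_global (frames i) (fst (out i))) else pos i,
   fun i => if on i then snd (out i) else col i).

Fixpoint exec (V : visibility) (T : team) (A : algorithm) (frames : nat -> frame)
  (act : nat -> nat -> bool) (init : nat -> point) (t : nat) : config :=
  match t with
  | O => (init, fun _ => 0%nat)
  | S t' => step V T A frames (act t') (exec V T A frames act init t')
  end.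

Definition sched_ok (X : scheduler) (T : team) (act : nat -> nat -> bool) : Prop :=
  match X with
  | FSync => forall t i, (i < t_size T)%nat -> act t i = true
  | SSync => forall i, (i < t_size T)%nat ->
               forall t, exists t', (t <= t')%nat /\ act t' i = true
  end.

Inductive vis_reach (T : team) (p : nat -> point) : nat -> nat -> Prop :=
  | vr_refl i : vis_reach T p i i
  | vr_step i j k : vis_reach T p i j -> (k < t_size T)%nat ->
                    dist (p j) (p k) <= t_range T -> vis_reach T p i k.

Definition init_connected (T : team) (p : nat -> point) : Prop :=
  forall i j, (i < t_size T)%nat -> (j < t_size T)%nat -> vis_reach T p i j.

(** A problem (task) is a predicate on the sequence of configurations
    (positions of the robots at each round). *)
Definition problem := (nat -> nat -> point) -> Prop.

Definition LUMI_solvable (X : scheduler) (V : visibility) (T : team) (P : problem) : Prop :=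
  exists (k : nat) (A : algorithm),
    (0 < k)%nat /\ uses_colors k A /\ perm_invariant A /\
    forall (init : nat -> point) (frames : nat -> frame) (act : nat -> nat -> bool),
      init_connected T init ->
      (forall i, frame_valid (frames i)) ->
      sched_ok X T act ->
      P (fun t => fst (exec V T A frames act init t)).

Definition LUMI_ge (X1 : scheduler) (V1 : visibility) (X2 : scheduler) (V2 : visibility) : Prop :=
  forall T : team, team_valid T ->
    forall P : problem, LUMI_solvable X2 V2 T P -> LUMI_solvable X1 V1 T P.

Definition LUMI_gt (X1 : scheduler) (V1 : visibility) (X2 : scheduler) (V2 : visibility) : Prop :=
  LUMI_ge X1 V1 X2 V2 /\
  exists T : team, team_valid T /\
    exists P : problem, LUMI_solvable X1 V1 T P /\ ~ LUMI_solvable X2 V2 T P.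

(* Main.v *)
Require Import Defs.
From Stdlib Require Import Reals List Permutation Arith Lra Lia Bool.
From Stdlib Require Import Classical FunctionalExtensionality.
Open Scope R_scope.

Lemma perm_filter {A} (g : A -> bool) l l' : Permutation l l' -> Permutation (filter g l) (filter g l').
Proof.
  induction 1; simpl.
  - constructor.
  - destruct (g x); auto.
  - destruct (g x), (g y); auto; constructor.
  - eapply perm_trans; eauto.
Qed.

Definition nsq (w : point) : R := fst w ^ 2 + snd w ^ 2.

Definition visl (v : R) (w : point) : bool := if Rle_dec (nsq w) (v ^ 2) then true else false.

Definition Afilt (A : algorithm) : algorithm :=
  fun v c s => A v c (filter (fun e => visl v (fst e)) s).

Lemma nsq_local f w : frame_valid f -> nsq (to_local f w) = fr_scale f ^ 2 * nsq w.
Proof.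
  intros [Hk Hcs]. unfold nsq, to_local. destruct (fr_refl f); simpl;
  transitivity (fr_scale f ^2 * (fr_cos f ^2 + fr_sin f ^2) * (fst w ^2 + snd w ^2)); try ring;
  rewrite Hcs; ring.
Qed.

Lemma vis_equiv T f p q : frame_valid f -> 0 < t_range T ->
  visl (fr_scale f * t_range T) (to_local f (psub q p)) = seesb LimitedVis T p q.
Proof.
  intros Hf Hr. unfold visl, seesb. rewrite nsq_local by auto.
  destruct Hf as [Hk _].
  assert (E : nsq (psub q p) = (fst p - fst q)^2 + (snd p - snd q)^2) by (unfold nsq, psub; simpl; ring).
  rewrite E. unfold Defs.dist.
  set (S := (fst p - fst q)^2 + (snd p - snd q)^2).
  assert (HS : 0 <= S) by (unfold S; apply Rplus_le_le_0_compat; apply pow2_ge_0).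
  destruct (Rle_dec (fr_scale f ^ 2 * S) ((fr_scale f * t_range T) ^ 2)) as [h|h];
  destruct (Rle_dec (sqrt S) (t_range T)) as [h'|h']; auto; exfalso.
  - apply h'. rewrite <- (sqrt_pow2 (t_range T)) by lra. apply sqrt_le_1_alt.
    apply (Rmult_le_reg_l (fr_scale f ^ 2)). apply pow_lt; lra. rewrite Rpow_mult_distr in h. lra.
  - apply h. assert (S = sqrt S ^2) by (rewrite pow2_sqrt; auto).
    assert (0 <= sqrt S) by apply sqrt_pos.
    assert (S <= t_range T ^ 2) by (rewrite H; apply pow_incr; lra).
    rewrite Rpow_mult_distr. apply Rmult_le_compat_l; [apply pow_le; lra | auto].
Qed.

Lemma filt_aux (h : nat -> point * color) (g : point * color -> bool) (p q : nat -> bool) l :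
  (forall j, In j l -> g (h j) = q j) ->
  filter g (map h (filter p l)) = map h (filter (fun j => p j && q j) l).
Proof.
  induction l as [|a l IH]; intros Hq; simpl; auto.
  destruct (p a); simpl.
  - rewrite Hq by (left; auto). destruct (q a); simpl; rewrite IH; auto; intros; apply Hq; right; auto.
  - apply IH; intros; apply Hq; right; auto.
Qed.

Lemma snap_filt T f pos col i : frame_valid f -> 0 < t_range T ->
  filter (fun e => visl (fr_scale f * t_range T) (fst e)) (snap FullVis T f pos col i)
  = snap LimitedVis T f pos col i.
Proof.
  intros Hf Hr. unfold snap.
  rewrite (filt_aux _ _ _ (fun j => seesb LimitedVis T (pos i) (pos j))).
  - f_equal. apply filter_ext. intro j. simpl. rewrite andb_true_r. reflexivity.
  - intros j _. simpl. apply vis_equiv; auto.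
Qed.

Lemma exec_filt T A frames act init : 0 < t_range T -> (forall i, frame_valid (frames i)) ->
  forall t, exec FullVis T (Afilt A) frames act init t = exec LimitedVis T A frames act init t.
Proof.
  intros Hr Hf t. induction t as [|t IH]; simpl; auto.
  rewrite IH. unfold step. unfold Afilt. 
  set (c := exec LimitedVis T A frames act init t).
  f_equal; apply functional_extensionality; intro i;
  rewrite snap_filt by auto; reflexivity.
Qed.

Lemma part1 : LUMI_ge SSync FullVis SSync LimitedVis.
Proof.
  intros T [_ Hr] P [k [A [Hk [Hc [Hp H]]]]].
  exists k, (Afilt A). split; [auto|split;[|split]].
  - intros v c s. apply Hc.
  - intros v c s s' Hs. unfold Afilt. apply Hp. apply perm_filter; auto.
  - intros init frames act Hi Hf Hs.
    replace (fun t => fst (exec FullVis T (Afilt A) frames act init t))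
      with (fun t => fst (exec LimitedVis T A frames act init t)).
    + apply H; auto.
    + apply functional_extensionality; intro t. rewrite exec_filt; auto.
Qed.
Definition sqd (a b : point) : R := (fst a - fst b)^2 + (snd a - snd b)^2.
Definition far (v : R) (a b : point) : bool := if Rlt_dec (6 * v^2) (sqd a b) then true else false.
Definition condb (v : R) (ws : list point) : bool := existsb (fun a => existsb (far v a) ws) ws.
Definition Afull : algorithm := fun v c s =>
  if condb v ((0,0) :: map fst s) then ((0,0),0%nat) else ((1,0),0%nat).

Definition CondP (T : team) (p : nat -> point) : Prop :=
  exists a b, (a < t_size T)%nat /\ (b < t_size T)%nat /\ 6 * t_range T ^ 2 < sqd (p a) (p b).

Lemma existsb_perm {A} (g : A -> bool) l l' : Permutation l l' -> existsb g l = existsb g l'.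
Proof.
  induction 1; simpl; auto.
  - rewrite IHPermutation; auto.
  - destruct (g x), (g y); auto.
  - congruence.
Qed.



Lemma condb_perm v l l' : Permutation l l' -> condb v l = condb v l'.
Proof.
  intro H. unfold condb. rewrite <- (existsb_perm _ _ _ H).
  f_equal. apply functional_extensionality; intro a. apply existsb_perm; auto.
Qed.

Lemma Afull_perm : perm_invariant Afull.
Proof.
  intros v c s s' H. unfold Afull.
  rewrite (condb_perm v ((0,0) :: map fst s) ((0,0) :: map fst s')); auto.
  constructor. apply Permutation_map; auto.
Qed.

Lemma local_zero f p : to_local f (psub p p) = (0,0).
Proof.
  unfold to_local, psub; destruct (fr_refl f); simpl; f_equal; ring.
Qed.

Lemma in_ws T f pos col i w : (i < t_size T)%nat ->
  In w ((0,0) :: map fst (snap FullVis T f pos col i)) <->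
  exists j, (j < t_size T)%nat /\ w = to_local f (psub (pos j) (pos i)).
Proof.
  intros Hi. unfold snap. rewrite map_map. simpl. split.
  - intros [Hw | Hw].
    + exists i. split; auto. rewrite local_zero; auto.
    + apply in_map_iff in Hw. destruct Hw as [j [Hj Hin]].
      apply filter_In in Hin. destruct Hin as [Hin _]. apply in_seq in Hin.
      exists j. split; [lia|auto].
  - intros [j [Hj ->]]. destruct (Nat.eq_dec j i) as [->|Hne].
    + left. rewrite local_zero; auto.
    + right. apply in_map_iff. exists j. split; auto.
      apply filter_In. split. apply in_seq; lia.
      rewrite andb_true_r. apply Nat.eqb_neq in Hne. rewrite Hne. auto.
Qed.

Lemma sqd_local f a b c : frame_valid f ->
  sqd (to_local f (psub a c)) (to_local f (psub b c)) = fr_scale f ^ 2 * sqd a b.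
Proof.
  intros [Hk Hcs]. unfold sqd, to_local, psub. destruct (fr_refl f); simpl;
  transitivity (fr_scale f ^2 * (fr_cos f ^2 + fr_sin f ^2) * ((fst a - fst b) ^2 + (snd a - snd b) ^2)); try ring;
  rewrite Hcs; ring.
Qed.

Lemma key T f pos col i : frame_valid f -> (i < t_size T)%nat ->
  (condb (fr_scale f * t_range T) ((0,0) :: map fst (snap FullVis T f pos col i)) = true
   <-> CondP T pos).
Proof.
  intros Hf Hi. unfold condb. rewrite existsb_exists. split.
  - intros [a [Ha Hb]]. rewrite existsb_exists in Hb. destruct Hb as [b [Hb Hab]].
    apply in_ws in Ha; auto. apply in_ws in Hb; auto.
    destruct Ha as [ja [Hja ->]]. destruct Hb as [jb [Hjb ->]].
    exists ja, jb. split; auto. split; auto.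
    unfold far in Hab. rewrite sqd_local in Hab by auto.
    destruct (Rlt_dec _ _) as [h|h]; [|discriminate].
    destruct Hf as [Hk _].
    apply (Rmult_lt_reg_l (fr_scale f ^ 2)). apply pow_lt; lra.
    rewrite Rpow_mult_distr in h. lra.
  - intros [ja [jb [Hja [Hjb H]]]].
    exists (to_local f (psub (pos ja) (pos i))). split. apply in_ws; eauto.
    apply existsb_exists. exists (to_local f (psub (pos jb) (pos i))). split. apply in_ws; eauto.
    unfold far. rewrite sqd_local by auto.
    destruct (Rlt_dec _ _) as [h|h]; auto. exfalso. apply h.
    destruct Hf as [Hk _]. rewrite Rpow_mult_distr.
    replace (6 * (fr_scale f ^ 2 * t_range T ^ 2)) with (fr_scale f ^ 2 * (6 * t_range T ^ 2)) by ring.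
    apply Rmult_lt_compat_l; auto. apply pow_lt; lra.
Qed.

Definition Pb (T : team) : problem := fun traj =>
  (CondP T (traj 0%nat) -> forall t i, traj t i = traj 0%nat i) /\
  (~ CondP T (traj 0%nat) -> exists t i, traj t i <> traj 0%nat i).

Lemma full_solv T : (1 <= t_size T)%nat -> LUMI_solvable SSync FullVis T (Pb T).
Proof.
  intros Hn. exists 1%nat, Afull. split; [lia|split;[|split]].
  - intros v c s. unfold Afull. destruct condb; simpl; lia.
  - apply Afull_perm.
  - intros init frames act _ Hf Hs. split; simpl.
    + intros HC.
      assert (Hst : forall t, fst (exec FullVis T Afull frames act init t) = init).
      { induction t as [|t IH]; simpl; auto.
        apply functional_extensionality; intro i. unfold step. simpl.
        destruct (act t i && (i <? t_size T)%nat) eqn:E; rewrite IH; auto.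
        apply andb_prop in E. destruct E as [_ E]. apply Nat.ltb_lt in E.
        unfold Afull. 
        rewrite (proj2 (key T (frames i) init _ i (Hf i) E) HC). simpl.
        unfold padd, to_global. destruct (fr_refl (frames i)); destruct (init i); simpl; f_equal;
        unfold Rdiv; ring. }
      intros t i. rewrite Hst. auto.
    + intros HC. apply NNPP. intro Hno.
      assert (Hall : forall t, fst (exec FullVis T Afull frames act init t) = init).
      { intro t. apply functional_extensionality; intro i. apply NNPP. intro Hne. apply Hno.
        exists t, i. auto. }
      destruct (Hs 0%nat ltac:(lia) 0%nat) as [t' [_ Ha]].
      pose proof (Hall (S t')) as H1. simpl in H1. rewrite Hall in H1.
      apply (f_equal (fun g => g 0%nat)) in H1. unfold step in H1. simpl in H1.
      rewrite Ha in H1. replace (0 <? t_size T)%nat with true in H1 by (symmetry; apply Nat.ltb_lt; lia).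
      simpl in H1. unfold Afull in H1.
      destruct (condb _ _) eqn:E.
      * exfalso. apply HC. apply (key T (frames 0%nat) init (snd (exec FullVis T Afull frames act init t')) 0%nat (Hf 0%nat)); [lia|]. exact E.
      * simpl in H1. destruct (Hf 0%nat) as [Hk Hcs].
        unfold padd, to_global in H1. destruct (init 0%nat) as [x y].
        destruct (fr_refl (frames 0%nat)); simpl in H1; injection H1; intros H2 H3;
        assert (Hc : fr_cos (frames 0%nat) * (1 / fr_scale (frames 0%nat)) = 0) by lra;
        assert (Hs' : fr_sin (frames 0%nat) * (1 / fr_scale (frames 0%nat)) = 0) by lra;
        apply Rmult_integral in Hc; apply Rmult_integral in Hs';
        assert (1 / fr_scale (frames 0%nat) <> 0) by (apply Rgt_not_eq; apply Rdiv_lt_0_compat; lra);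
        destruct Hc as [Hc|Hc]; try contradiction; destruct Hs' as [Hs'|Hs']; try contradiction;
        rewrite Hc, Hs' in Hcs; lra.
Qed.
Definition T0 : team := {| t_size := 4; t_range := 1 |}.

Definition initZ (i : nat) : point :=
  match i with 0 => (-3/5, 4/5) | 1 => (0,0) | 2 => (1,0) | _ => (8/5, -4/5) end.
Definition initU (i : nat) : point :=
  match i with 0 => (-3/5, 4/5) | 1 => (0,0) | 2 => (1,0) | _ => (8/5, 4/5) end.
Definition fid : frame := {| fr_scale := 1; fr_cos := 1; fr_sin := 0; fr_refl := false |}.
Definition frefl : frame := {| fr_scale := 1; fr_cos := 1; fr_sin := 0; fr_refl := true |}.
Definition frames1 : nat -> frame := fun _ => fid.
Definition frames2 : nat -> frame := fun i => if (i <? 2)%nat then fid else frefl.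

Lemma fid_valid : frame_valid fid.  Proof. split; simpl; lra. Qed.
Lemma frefl_valid : frame_valid frefl.  Proof. split; simpl; lra. Qed.

Lemma dist_sqd p q : Defs.dist p q = sqrt (sqd p q).
Proof. reflexivity. Qed.

Lemma see_le p q : sqd p q <= 1 -> seesb LimitedVis T0 p q = true.
Proof.
  intro H. unfold seesb. change (t_range T0) with 1. rewrite dist_sqd. destruct (Rle_dec _ _) as [h|h]; auto. exfalso. apply h.
  rewrite <- sqrt_1. apply sqrt_le_1_alt; auto.
Qed.

Lemma see_gt p q : 1 < sqd p q -> seesb LimitedVis T0 p q = false.
Proof.
  intro H. unfold seesb. change (t_range T0) with 1. rewrite dist_sqd. destruct (Rle_dec _ _) as [h|h]; auto. exfalso.
  rewrite <- sqrt_1 in h. assert (sqrt 1 < sqrt (sqd p q)).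
  apply sqrt_lt_1_alt; lra. lra.
Qed.

Lemma reach_edge p i j k : vis_reach T0 p i j -> (k < 4)%nat -> sqd (p j) (p k) <= 1 -> vis_reach T0 p i k.
Proof.
  intros H Hk Hd. apply vr_step with j; auto. rewrite dist_sqd; change (t_range T0) with 1; rewrite <- sqrt_1. apply sqrt_le_1_alt; auto.
Qed.

Lemma reach_trans T p i j k : vis_reach T p i j -> vis_reach T p j k -> vis_reach T p i k.
Proof. intros H1 H2. induction H2; auto. apply vr_step with j; auto. Qed.

Ltac nums := unfold sqd; simpl; lra.

Lemma conn_gen p : sqd (p 0%nat) (p 1%nat) <= 1 -> sqd (p 1%nat) (p 2%nat) <= 1 -> sqd (p 2%nat) (p 3%nat) <= 1 ->
  init_connected T0 p.
Proof.
  intros h01 h12 h23.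
  assert (s : forall a b, sqd a b = sqd b a) by (intros; unfold sqd; ring).
  assert (down : forall i, (i < 4)%nat -> vis_reach T0 p i 0).
  { intros i Hi. destruct i as [|[|[|[|i]]]]; try (simpl in Hi; lia).
    - constructor.
    - apply (reach_edge _ _ 1); [constructor|simpl;lia|rewrite s; auto].
    - apply (reach_edge _ _ 1); [|simpl;lia|rewrite s; auto].
      apply (reach_edge _ _ 2); [constructor|simpl;lia|rewrite s; auto].
    - apply (reach_edge _ _ 1); [|simpl;lia|rewrite s; auto].
      apply (reach_edge _ _ 2); [|simpl;lia|rewrite s; auto].
      apply (reach_edge _ _ 3); [constructor|simpl;lia|rewrite s; auto]. }
  assert (up : forall j, (j < 4)%nat -> vis_reach T0 p 0 j).
  { intros j Hj. destruct j as [|[|[|[|j]]]]; try (simpl in Hj; lia).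
    - constructor.
    - apply (reach_edge _ _ 0); [constructor|simpl;lia|auto].
    - apply (reach_edge _ _ 1); [|simpl;lia|auto].
      apply (reach_edge _ _ 0); [constructor|simpl;lia|auto].
    - apply (reach_edge _ _ 2); [|simpl;lia|auto].
      apply (reach_edge _ _ 1); [|simpl;lia|auto].
      apply (reach_edge _ _ 0); [constructor|simpl;lia|auto]. }
  intros i j Hi Hj. eapply reach_trans; [apply down|apply up]; auto.
Qed.

Lemma snap_eq V T f1 f2 p1 p2 c1 c2 i :
  (forall j, (j < t_size T)%nat -> seesb V T (p1 i) (p1 j) = seesb V T (p2 i) (p2 j)) ->
  (forall j, (j < t_size T)%nat -> j <> i -> seesb V T (p1 i) (p1 j) = true ->
     to_local f1 (psub (p1 j) (p1 i)) = to_local f2 (psub (p2 j) (p2 i))) ->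
  (forall j, c1 j = c2 j) ->
  snap V T f1 p1 c1 i = snap V T f2 p2 c2 i.
Proof.
  intros Hs Hl Hc. unfold snap.
  rewrite (filter_ext_in _ (fun j => negb (Nat.eqb j i) && seesb V T (p2 i) (p2 j))%bool).
  - apply map_ext_in. intros j Hj. apply filter_In in Hj. destruct Hj as [Hj Hb].
    apply in_seq in Hj. apply andb_prop in Hb. destruct Hb as [Hb1 Hb2].
    rewrite Hc. f_equal. apply Hl. lia.
    apply negb_true_iff, Nat.eqb_neq in Hb1; auto. rewrite Hs; auto; lia.
  - intros j Hj. apply in_seq in Hj. rewrite Hs; auto. lia.
Qed.

Ltac seeval := repeat match goal with
  | |- context [seesb LimitedVis T0 ?p ?q] =>
      first [rewrite (see_le p q) by nums | rewrite (see_gt p q) by nums]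
  | H : context [seesb LimitedVis T0 ?p ?q] |- _ =>
      first [rewrite (see_le p q) in H by nums | rewrite (see_gt p q) in H by nums]
  end.

Lemma views_eq c1 c2 i : (i < 4)%nat -> (forall j, c1 j = c2 j) ->
  snap LimitedVis T0 (frames1 i) initZ c1 i = snap LimitedVis T0 (frames2 i) initU c2 i.
Proof.
  intros Hi Hc. apply snap_eq; auto.
  - intros j Hj. simpl in Hj.
    destruct i as [|[|[|[|i]]]]; try lia; destruct j as [|[|[|[|j]]]]; try lia; seeval; reflexivity.
  - intros j Hj Hne Hv. simpl in Hj.
    destruct i as [|[|[|[|i]]]]; try lia; destruct j as [|[|[|[|j]]]]; try lia; seeval;
    try discriminate; try (exfalso; apply Hne; reflexivity);
    unfold to_local, psub; simpl; f_equal; lra.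
Qed.

Lemma glob_zero p w : padd p (to_global fid w) = p -> forall f q, padd q (to_global f w) = q.
Proof.
  destruct p as [x y], w as [a b]. unfold padd, to_global; simpl. intro H. injection H; intros H1 H2.
  assert (a = 0) by (unfold Rdiv in *; lra). assert (b = 0) by (unfold Rdiv in *; lra). subst.
  intros f [u v]. destruct (fr_refl f); simpl; f_equal; unfold Rdiv; ring.
Qed.

Lemma limited_fail : ~ LUMI_solvable SSync LimitedVis T0 (Pb T0).
Proof.
  intros [k [A [Hk [Hc [Hp H]]]]].
  set (act := fun _ _ : nat => true).
  assert (Hs : sched_ok SSync T0 act) by (intros i _ t; exists t; split; auto).
  assert (Hf1 : forall i, frame_valid (frames1 i)) by (intros; apply fid_valid).
  assert (Hf2 : forall i, frame_valid (frames2 i)).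
  { intros i. unfold frames2. destruct (i <? 2)%nat; [apply fid_valid|apply frefl_valid]. }
  destruct (H initZ frames1 act) as [H1 _]; auto.
  { apply conn_gen; nums. }
  destruct (H initU frames2 act) as [_ H2]; auto.
  { apply conn_gen; nums. }
  simpl in H1, H2.
  specialize (H1 ltac:(exists 0%nat, 3%nat; split; [simpl; lia|split;[simpl;lia|]]; nums)).
  specialize (H2 ltac:(intros [a [b [Ha [Hb Hab]]]]; simpl in Ha, Hb;
     destruct a as [|[|[|[|a]]]]; try lia; destruct b as [|[|[|[|b]]]]; try lia;
     unfold sqd in Hab; simpl in Hab; lra)).
  assert (Inv : forall t, (forall i, fst (exec LimitedVis T0 A frames2 act initU t) i = initU i) /\
                          (forall i, snd (exec LimitedVis T0 A frames2 act initU t) i =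
                                     snd (exec LimitedVis T0 A frames1 act initZ t) i)).
  { induction t as [|t [IHp IHc]]; [simpl; split; auto|].
    pose proof (H1 (S t)) as H1S. pose proof (H1 t) as H1t.
    simpl exec in H1S |- *. unfold step in H1S |- *. simpl fst in H1S |- *. simpl snd.
    unfold act in *. simpl andb in H1S |- *.
    assert (Esnap : forall i, (i < 4)%nat ->
      snap LimitedVis T0 (frames2 i) (fst (exec LimitedVis T0 A frames2 act initU t))
        (snd (exec LimitedVis T0 A frames2 act initU t)) i =
      snap LimitedVis T0 (frames1 i) (fst (exec LimitedVis T0 A frames1 act initZ t))
        (snd (exec LimitedVis T0 A frames1 act initZ t)) i).
    { intros i Hi. symmetry. apply snap_eq.
      - intros j _. rewrite H1t, H1t, IHp, IHp.
        clear -Hi. 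
        destruct i as [|[|[|[|i]]]]; try lia; destruct j as [|[|[|[|j]]]]; seeval; reflexivity.
      - intros j Hj Hne Hv. rewrite H1t, H1t in Hv |- *. rewrite IHp, IHp. simpl in Hj. clear -Hi Hj Hne Hv.
        destruct i as [|[|[|[|i]]]]; try lia; destruct j as [|[|[|[|j]]]]; try lia;
        try (exfalso; apply Hne; reflexivity); seeval; try discriminate;
        unfold to_local, psub; simpl; f_equal; lra.
      - intro j. symmetry. apply IHc. }
    split; intro i; specialize (H1S i); destruct (i <? 4)%nat eqn:E; auto.
    - apply Nat.ltb_lt in E. rewrite Esnap by auto. rewrite IHc.
      assert (Hsc : fr_scale (frames2 i) = fr_scale (frames1 i)).
      { unfold frames2, frames1. destruct (i <? 2)%nat; reflexivity. }
      rewrite Hsc, IHp. rewrite H1t in H1S.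
      eapply glob_zero. exact H1S.
    - apply Nat.ltb_lt in E. rewrite Esnap by auto. rewrite IHc.
      assert (Hsc : fr_scale (frames2 i) = fr_scale (frames1 i)).
      { unfold frames2, frames1. destruct (i <? 2)%nat; reflexivity. }
      rewrite Hsc. reflexivity. }
  destruct H2 as [t [i Hne]]. apply Hne. apply (proj1 (Inv t)).
Qed.

Theorem theorem8 : LUMI_gt SSync FullVis SSync LimitedVis.
Proof.
  split.
  - exact part1.
  - exists T0. split. { split; simpl; [lia|lra]. }
    exists (Pb T0). split.
    + apply full_solv. simpl; lia.
    + exact limited_fail.
Qed.
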